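(* Let $G=(V,E)$ be a finite connected non-bipartite graph such that the signed graph $(G,\sigma_-)$ with the all-negative sign $\sigma_-\equiv-1$ satisfies $CD^{\sigma_-}(0,N)$ for some $N\in(1,\infty]$. Let $\lambda_{|V|}$ be the largest eigenvalue of the graph Laplacian $\Delta$. Then \[ 2-\lambda_{|V|}\geq \frac{1}{4\left(1+\sqrt{(N-1)/N}\right)}\cdot\frac{1}{d(D+1)\lceil (D+1)/2\rceil}, \] where $d$ is the maximal vertex degree, $D$ the diameter of $G$, and $\sqrt{(N-1)/N}:=1$ when $N=\infty$.
   Context: $G$ is a finite simple connected graph with degrees $d_x$. For a sign $\sigma:E\to\{\pm1\}$ ($\sigma_{xy}=\sigma(\{x,y\})$) the signed Laplacian is $\Delta^{\sigma}f(x)=\frac{1}{d_x}\sum_{y\sim x}(\sigma_{xy}f(y)-f(x))$; $\Delta$ is the case $\sigma\equiv+1$, whose eigenvalues ($-\Delta f=\lambda f$) are $0=\lambda_1<\lambda_2\le\dots\le\lambda_{|V|}\le 2$. $\Gamma^{\sigma}(f,g)=\frac12\{\Delta(fg)-g\Delta^{\sigma}f-f\Delta^{\sigma}g\}$, $\Gamma_2^{\sigma}(f,g)=\frac12\{\Delta\Gamma^{\sigma}(f,g)-\Gamma^{\sigma}(g,\Delta^{\sigma}f)-\Gamma^{\sigma}(f,\Delta^{\sigma}g)\}$. $CD^{\sigma}(K,N)$ means $\Gamma_2^{\sigma}(f,f)(x)\ge\frac1N(\Delta^\sigma f)^2(x)+K\Gamma^\sigma(f,f)(x)$ for all $f:V\to\mathbb{R}$,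 $x\in V$ ($\frac1N=0$ if $N=\infty$). $\lceil\cdot\rceil$ is the ceiling. *)

(* Defs.v *)
From mathcomp Require Import all_boot all_order all_algebra.
From mathcomp Require Import reals constructive_ereal.
Set Implicit Arguments. Unset Strict Implicit. Unset Printing Implicit Defensive.
Import Order.TTheory GRing.Theory Num.Theory.
Local Open Scope ring_scope.

Section Graph.
Variable T : finType.
Variable e : rel T.

Definition simple_graph : Prop := symmetric e /\ irreflexive e.
Definition connected_graph : Prop := forall x y : T, connect e x y.
Definition bipartite : Prop :=
  exists c : T -> bool, forall x y, e x y -> c x != c y.

Definition deg (x : T) : nat := #|[set y | e x y]|.
Definition max_deg : nat := \max_(x : T) deg x.

Definition ball (x : T) (n : nat) : {set T} :=
  iter n (fun S : {set T} => S :|: [set y | [exists z in S, e z y]]) [set x].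
(* least n with y within n steps of x (equals #|T| if unreachable) *)
Definition dist (x y : T) : nat := find (fun n => y \in ball x n) (iota 0 #|T|).
Definition diameter : nat := \max_(x : T) \max_(y : T) dist x y.

Variable R : realType.

Definition lapS (sigma : T -> T -> R) (f : T -> R) (x : T) : R :=
  (deg x)%:R^-1 * \sum_(y | e x y) (sigma x y * f y - f x).
Definition lap (f : T -> R) : T -> R := lapS (fun _ _ => 1) f.

Definition GammaS (sigma : T -> T -> R) (f g : T -> R) (x : T) : R :=
  2^-1 * (lap (fun z => f z * g z) x - g x * lapS sigma f x - f x * lapS sigma g x).

Definition Gamma2S (sigma : T -> T -> R) (f g : T -> R) (x : T) : R :=
  2^-1 * (lap (GammaS sigma f g) x - GammaS sigma g (lapS sigma f) x
          - GammaS sigma f (lapS sigma g) x).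

Definition invN (N : \bar R) : R := if N is r%:E then r^-1 else 0.

Definition CD (sigma : T -> T -> R) (K : R) (N : \bar R) : Prop :=
  forall (f : T -> R) (x : T),
    Gamma2S sigma f f x >= invN N * (lapS sigma f x) ^+ 2 + K * GammaS sigma f f x.


Definition lap_eigenvalue (lam : R) : Prop :=
  exists f : T -> R, (exists x, f x != 0) /\ forall x, - lap f x = lam * f x.

Definition largest_lap_eigenvalue (lam : R) : Prop :=
  lap_eigenvalue lam /\ forall mu, lap_eigenvalue mu -> mu <= lam.

End Graph.

Definition sigma_neg (T : finType) (R : realType) : T -> T -> R := fun _ _ => -1.

Definition sqrtNratio (R : realType) (N : \bar R) : R :=
  if N is r%:E then Num.sqrt ((r - 1) / r) else 1.

(* Main.v *)
Require Import Defs.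
From mathcomp Require Import all_boot all_order all_algebra.
From mathcomp Require Import reals constructive_ereal.
From mathcomp Require Import zify ring lra.
Import Order.TTheory GRing.Theory Num.Theory.
Local Open Scope ring_scope.

Inductive walk (T : finType) (e : rel T) (x0 : T) : T -> nat -> Prop :=
 | walk0 : walk T e x0 x0 0
 | walkS u v k : walk T e x0 u k -> e u v -> walk T e x0 v k.+1.
Arguments walk [T] e x0 _ _.
Arguments walk0 {T e x0}.
Arguments walkS [T e x0 u v k].

Lemma ballS {T : finType} (e : rel T) x n :
  ball e x n.+1 = ball e x n :|: [set y | [exists z in ball e x n, e z y]].
Proof. by rewrite /ball iterS. Qed.

Lemma ball_walk {T : finType} (e : rel T) x n y :
  y \in ball e x n -> exists2 k, (k <= n)%N & walk e x y k.
Proof.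
elim: n y => [|n IH] y.
  by rewrite /ball /= in_set1 => /eqP ->; exists 0%N => //; constructor.
rewrite ballS in_setU => /orP [H|].
  by have [k Hk Hw] := IH _ H; exists k => //; apply: leqW.
rewrite inE => /existsP [z /andP [Hz Hzy]].
have [k Hk Hw] := IH _ Hz; exists k.+1 => //; exact: walkS Hw Hzy.
Qed.

Lemma walk_ball {T : finType} (e : rel T) x y k :
  walk e x y k -> y \in ball e x k.
Proof.
elim => [|u v k' Hw IH Huv]; first by rewrite /ball /= set11.
rewrite ballS in_setU; apply/orP; right; rewrite inE; apply/existsP.
by exists u; rewrite IH.
Qed.

Lemma path_walk {T : finType} (e : rel T) x p :
  path e x p -> walk e x (last x p) (size p).
Proof.
elim/last_ind: p => [|p z IH]; first by move=> _; constructor.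
rewrite rcons_path => /andP [Hp Hz]; rewrite last_rcons size_rcons.
exact: walkS (IH Hp) Hz.
Qed.

Lemma dist_walk {T : finType} (e : rel T) x y :
  connected_graph e -> walk e x y (dist e x y).
Proof.
move=> conn; have /connectP [p Hp Hy] := conn x y.
case: (shortenP Hp) Hy => p' Hp' Hu _ Hy.
have Hs : (size p' < #|T|)%N.
  have := max_card (mem (x :: p')).
  by rewrite (card_uniqP Hu) /=.
have Hb : y \in ball e x (size p') by rewrite Hy; apply: walk_ball; apply: path_walk.
have Hhas : has (fun n => y \in ball e x n) (iota 0 #|T|).
  by apply/hasP; exists (size p') => //; rewrite mem_iota.
have Hlt : (dist e x y < #|T|)%N by rewrite /dist -[X in (_ < X)%N](size_iota 0 #|T|) -has_find.
have := nth_find 0%N Hhas; rewrite -/(dist e x y) nth_iota // add0n => Hd.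
have [k Hk Hw] := ball_walk _ _ _ _ Hd.
case: (ltnP k (dist e x y)) => Hk'.
  have := before_find 0%N Hk'; rewrite nth_iota ?add0n ?(walk_ball _ _ _ _ Hw) //.
  exact: ltn_trans Hk' Hlt.
by have <- : k = dist e x y by apply/eqP; rewrite eqn_leq Hk Hk'.
Qed.

Lemma dist_le_diam {T : finType} (e : rel T) x y : (dist e x y <= diameter e)%N.
Proof.
rewrite /diameter; apply: leq_trans (leq_bigmax x).
exact: (leq_bigmax (F := fun y => dist e x y) y).
Qed.
Lemma lapS_ext {T : finType} (e : rel T) {R : realType} (s : T -> T -> R) g g' x :
  (forall z, g z = g' z) -> lapS e s g x = lapS e s g' x.
Proof. by move=> H; rewrite /lapS; congr (_ * _); apply: eq_bigr => y _; rewrite !H. Qed.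

Lemma lapS_scale {T : finType} (e : rel T) {R : realType} (s : T -> T -> R) c g x :
  lapS e s (fun z => c * g z) x = c * lapS e s g x.
Proof.
rewrite /lapS mulrCA; congr (_ * _); rewrite mulr_sumr; apply: eq_bigr => y _; ring.
Qed.

Lemma lap_scale {T : finType} (e : rel T) {R : realType} c (g : T -> R) x :
  lap e (fun z => c * g z) x = c * lap e g x.
Proof. exact: lapS_scale. Qed.

Lemma lap_add {T : finType} (e : rel T) {R : realType} (g h : T -> R) x :
  lap e (fun z => g z + h z) x = lap e g x + lap e h x.
Proof.
rewrite /lap /lapS -mulrDr -big_split /=; congr (_ * _); apply: eq_bigr => y _; ring.
Qed.

Lemma lap_max {T : finType} (e : rel T) {R : realType} (g : T -> R) x :
  (forall y, g y <= g x) -> lap e g x <= 0.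
Proof.
move=> H; rewrite /lap /lapS mulr_ge0_le0 ?invr_ge0 ?ler0n //.
apply: sumr_le0 => y _; rewrite mul1r subr_le0; exact: H.
Qed.

Lemma sum_deg_lap {T : finType} (e : rel T) {R : realType} (g : T -> R) :
  symmetric e -> (forall x, (0 < deg e x)%N) ->
  \sum_x (deg e x)%:R * lap e g x = 0.
Proof.
move=> sym dpos.
have -> : \sum_x (deg e x)%:R * lap e g x = \sum_x \sum_(y | e x y) (g y - g x).
  apply: eq_bigr => x _; rewrite /lap /lapS mulrA mulfV ?mul1r ?pnatr_eq0 -?lt0n //.
  by apply: eq_bigr => y _; rewrite mul1r.
rewrite (eq_bigr (fun x => \sum_(y | e x y) g y - \sum_(y | e x y) g x)); last first.
  by move=> x _; rewrite sumrB.
rewrite sumrB (exchange_big_dep (fun y => true)) //=.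
rewrite (eq_bigr (fun y => \sum_(x | e y x) g y)) ?subrr // => y _.
by apply: eq_bigl => x; rewrite sym.
Qed.

Lemma Gamma_neg {T : finType} (e : rel T) {R : realType} (f : T -> R) x :
  (0 < deg e x)%N ->
  2 * (deg e x)%:R * GammaS e (@sigma_neg T R) f f x = \sum_(y | e x y) (f y + f x) ^+ 2.
Proof.
move=> dp; have dn : (deg e x)%:R != 0 :> R by rewrite pnatr_eq0 -lt0n.
rewrite /GammaS /lap /lapS /sigma_neg.
set S1 := \sum_(y | e x y) _.
set S2 := \sum_(y | e x y) _.
have -> : \sum_(y | e x y) (f y + f x) ^+ 2 = S1 - 2 * f x * S2.
  rewrite /S1 /S2 mulr_sumr -sumrB; apply: eq_bigr => y _; ring.
field; exact: dn.
Qed.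

Lemma Gamma2_eig {T : finType} (e : rel T) {R : realType} (s : T -> T -> R) f mu x :
  (forall z, lapS e s f z = - mu * f z) ->
  Gamma2S e s f f x = 2^-1 * lap e (GammaS e s f f) x + mu * GammaS e s f f x.
Proof.
move=> H.
have G : GammaS e s f (lapS e s f) x = - mu * GammaS e s f f x.
  rewrite /GammaS /lap.
  rewrite (lapS_ext _ _ (fun z => f z * lapS e s f z) (fun z => - mu * (f z * f z))); last first.
    by move=> z; rewrite H; ring.
  rewrite lapS_scale.
  rewrite (lapS_ext _ _ (lapS e s f) (fun z => - mu * f z)) // lapS_scale H.
  ring.
by rewrite /Gamma2S G; field.
Qed.

Lemma lap_sq {T : finType} (e : rel T) {R : realType} (s : T -> T -> R) f mu x :
  (forall z, lapS e s f z = - mu * f z) ->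
  lap e (fun z => f z * f z) x = 2 * GammaS e s f f x - 2 * mu * (f x) ^+ 2.
Proof. by move=> H; rewrite /GammaS H; field. Qed.

Lemma Gamma_ge0 {T : finType} (e : rel T) {R : realType} (f : T -> R) x :
  (0 < deg e x)%N -> 0 <= GammaS e (@sigma_neg T R) f f x.
Proof.
move=> dp; have := Gamma_neg e f x dp.
have d0 : 0 < 2 * (deg e x)%:R :> R by rewrite mulr_gt0 // ltr0n.
move=> E; have : 0 <= 2 * (deg e x)%:R * GammaS e (@sigma_neg T R) f f x.
  by rewrite E; apply: sumr_ge0 => y _; apply: sqr_ge0.
by rewrite pmulr_rge0.
Qed.

Lemma grad_est {T : finType} (e : rel T) {R : realType} (N : \bar R) (f : T -> R) mu s M x1 :
  symmetric e -> (forall x, (0 < deg e x)%N) ->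
  CD e (@sigma_neg T R) 0 N -> 0 < s -> s ^+ 2 = 1 - invN N ->
  (forall z, lapS e (@sigma_neg T R) f z = - mu * f z) ->
  (forall y, f y ^+ 2 <= M) -> f x1 != 0 ->
  0 <= mu /\ forall y, GammaS e (@sigma_neg T R) f f y <= 2 * (1 + s) * mu * M.
Proof.
move=> sym dpos HCD s0 ss Heig HM fx1.
set Ga := GammaS e (@sigma_neg T R) f f.
have Ga0 : forall y, 0 <= Ga y by move=> y; apply: Gamma_ge0.
have E : \sum_x ((deg e x)%:R * Ga x) = mu * \sum_x ((deg e x)%:R * f x ^+ 2).
  have := sum_deg_lap e (fun z => f z * f z) sym dpos.
  rewrite (eq_bigr (fun x => 2 * ((deg e x)%:R * Ga x) - 2 * mu * ((deg e x)%:R * f x ^+ 2))); last first.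
    by move=> x _; rewrite (lap_sq _ _ _ _ _ Heig); rewrite /Ga; ring.
  rewrite sumrB -!mulr_sumr => H; lra.
have SA : 0 <= \sum_x ((deg e x)%:R * Ga x) by apply: sumr_ge0 => x _; rewrite mulr_ge0.
have SB : 0 < \sum_x ((deg e x)%:R * f x ^+ 2).
  rewrite (bigD1 x1) //=.
  have t2 : 0 <= \sum_(i | i != x1) (deg e i)%:R * f i ^+ 2.
    by apply: sumr_ge0 => x _; rewrite mulr_ge0 ?sqr_ge0.
  have t1 : 0 < (deg e x1)%:R * f x1 ^+ 2.
    by rewrite mulr_gt0 ?ltr0n // lt0r sqrf_eq0 fx1 sqr_ge0.
  lra.
have mu0 : 0 <= mu.
  rewrite leNgt; apply/negP => mun.
  have : mu * \sum_x ((deg e x)%:R * f x ^+ 2) < 0 by rewrite pmulr_llt0.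
  by rewrite -E ltNge SA.
split => //.
have M0 : 0 <= M by apply: le_trans (HM x1); apply: sqr_ge0.
case: (ler0P mu) => [mule|mupos].
  have mu00 : mu = 0 by apply/eqP; rewrite eq_le mule mu0.
  move: E; rewrite mu00 mul0r => E y.
  have := psumr_eq0P (P := xpredT) (fun x _ => mulr_ge0 (ler0n _ _) (Ga0 x)) E (i := y) isT.
  move/eqP; rewrite mulf_eq0 pnatr_eq0 eqn0Ngt dpos /= => /eqP ->.
  by rewrite !mulr0 mul0r.
set G := fun z => Ga z + ((1 + s) * mu) * (f z * f z).
case: (@arg_maxP _ _ T x1 xpredT G isT) => xG _ Hmax.
have Hl : lap e G xG <= 0 by apply: lap_max => y; exact: Hmax.
rewrite /G (lap_add e Ga (fun z => ((1 + s) * mu) * (f z * f z))) in Hl.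
rewrite (lap_scale e ((1 + s) * mu) (fun z => f z * f z)) in Hl.
rewrite (lap_sq _ _ _ _ _ Heig) in Hl.
have Hcd := HCD f xG.
rewrite (Gamma2_eig _ _ _ _ _ Heig) Heig in Hcd.
have iN : invN N = 1 - s ^+ 2 by rewrite ss; ring.
rewrite iN in Hcd.
set L := lap e Ga xG in Hl Hcd.
set g := Ga xG in Hl Hcd.
set p := f xG in Hl Hcd.
have key : (s * mu) * g <= (s * mu) * ((1 + s) * mu * p ^+ 2).
  rewrite -/Ga -/g in Hcd Hl. nra.
rewrite ler_pM2l ?mulr_gt0 // in key.
have c0 : 0 <= (1 + s) * mu by rewrite mulr_ge0 // addr_ge0 // ltW.
move=> y; apply: (le_trans (y := G y)).
  by rewrite /G lerDl; apply: mulr_ge0 => //; rewrite -expr2 sqr_ge0.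
apply: le_trans (Hmax y isT) _.
rewrite /G -/g -/p -expr2.
have := HM xG; rewrite -/p => hp.
nra.
Qed.

Lemma walk_bound {T : finType} (e : rel T) {R : realType} (f : T -> R) h x0 y k :
  symmetric e ->
  (forall x u w, e x u -> e x w -> `|f u - f w| <= h) ->
  (forall u v, e u v -> `|f v + f u| <= h) ->
  walk e x0 y k ->
  exists j, (k = (2 * j)%N /\ `|f y - f x0| <= j%:R * h) \/
    (k = (2 * j).+1 /\ exists w, e w y /\ `|f w - f x0| <= j%:R * h
                                      /\ `|f y + f x0| <= j%:R * h + h).
Proof.
move=> sym Hp He; elim => [|u v k' W [j [[-> H] | [-> [w [ewu [Hw Hu]]]]]] euv].
- by exists 0%N; left; split => //; rewrite subrr normr0 mul0r.
- exists j; right; split => //; exists u; split => //; split => //.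
  move: (He u v euv) H; rewrite !ler_norml => /andP [a1 a2] /andP [b1 b2].
  apply/andP; split; lra.
- exists j.+1; left; split; first by rewrite mulnS.
  have euw : e u w by rewrite sym.
  move: (Hp u v w euv euw) Hw; rewrite !ler_norml mulrSr mulrDl mul1r.
  move=> /andP [a1 a2] /andP [b1 b2].
  apply/andP; split; lra.
Qed.

Lemma pair_bound {T : finType} (e : rel T) {R : realType} (f : T -> R) dm Bb x u w :
  (0 < deg e x)%N -> (deg e x)%:R <= dm -> 0 <= Bb ->
  GammaS e (@sigma_neg T R) f f x <= Bb -> e x u -> e x w ->
  (f u - f w) ^+ 2 <= 4 * dm * Bb.
Proof.
move=> dp Hd B0 HG exu exw.
have d0 : 0 <= dm by apply: le_trans Hd; apply: ler0n.
have E := Gamma_neg e f x dp.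
have G0 := Gamma_ge0 e f x dp.
have HS : 2 * (deg e x)%:R * GammaS e (@sigma_neg T R) f f x <= 2 * dm * Bb.
  apply: ler_pM => //; first by rewrite mulr_ge0 ?ler0n.
  by rewrite ler_pM2l.
case: (eqVneq u w) => [<-|nuw].
  by rewrite subrr expr0n /= mulr_ge0 ?mulr_ge0.
have : (f u + f x) ^+ 2 + (f w + f x) ^+ 2 <= \sum_(y | e x y) (f y + f x) ^+ 2.
  rewrite (bigD1 u) //= (bigD1 w) /=; last by rewrite exw eq_sym nuw.
  rewrite addrA lerDl; apply: sumr_ge0 => y _; apply: sqr_ge0.
rewrite -E => H2.
have H3 : (f u - f w) ^+ 2 <= 2 * ((f u + f x) ^+ 2 + (f w + f x) ^+ 2).
  have := sqr_ge0 (f u + f w + 2 * f x).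
  have -> : (f u + f w + 2 * f x) ^+ 2 = 2 * ((f u + f x) ^+ 2 + (f w + f x) ^+ 2) - (f u - f w) ^+ 2 by ring.
  lra.
lra.
Qed.

Lemma edge_bound {T : finType} (e : rel T) {R : realType} (f : T -> R) dm Bb u v :
  (0 < deg e u)%N -> (deg e u)%:R <= dm -> 0 <= Bb ->
  GammaS e (@sigma_neg T R) f f u <= Bb -> e u v ->
  (f v + f u) ^+ 2 <= 4 * dm * Bb.
Proof.
move=> dp Hd B0 HG euv.
have d0 : 0 <= dm by apply: le_trans Hd; apply: ler0n.
have E := Gamma_neg e f u dp.
have G0 := Gamma_ge0 e f u dp.
have HS : 2 * (deg e u)%:R * GammaS e (@sigma_neg T R) f f u <= 2 * dm * Bb.
  apply: ler_pM => //; first by rewrite mulr_ge0 ?ler0n.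
  by rewrite ler_pM2l.
have : (f v + f u) ^+ 2 <= \sum_(y | e u y) (f y + f u) ^+ 2.
  rewrite (bigD1 v) //= lerDl; apply: sumr_ge0 => y _; apply: sqr_ge0.
rewrite -E => H2.
have : 0 <= dm * Bb by apply: mulr_ge0.
lra.
Qed.
Lemma lapS_neg_lap {T : finType} (e : rel T) {R : realType} (f : T -> R) z :
  (0 < deg e z)%N -> lapS e (@sigma_neg T R) f z = - lap e f z - 2 * f z.
Proof.
move=> dp; have dn : (deg e z)%:R != 0 :> R by rewrite pnatr_eq0 -lt0n.
rewrite /lap /lapS /sigma_neg.
have -> : \sum_(y | e z y) (-1 * f y - f z) = - \sum_(y | e z y) (1 * f y - f z) - \sum_(y | e z y) (2 * f z).
  rewrite -sumrN -sumrB; apply: eq_bigr => y _; ring.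
rewrite (eq_bigl (fun y => y \in [set y | e z y]) (fun y => 2 * f z)); last by move=> y; rewrite inE.
rewrite sumr_const -/(deg e z) -mulr_natr.
field; exact: dn.
Qed.

Lemma s_facts {R : realType} (N : \bar R) :
  (1 < N)%E -> 0 < sqrtNratio N /\ sqrtNratio N ^+ 2 = 1 - invN N.
Proof.
case: N => [r||] //=; rewrite ?lte_fin => r1; last by split => //; rewrite expr1n subr0.
have r0 : 0 < r by lra.
have q : 0 < (r - 1) / r by rewrite divr_gt0 // subr_gt0.
split; first by rewrite sqrtr_gt0.
rewrite sqr_sqrtr ?ltW //; field; lra.
Qed.

Lemma ar_even {R : realType} {fu fv fx h i j : R} :
  `|fv + fu| <= h -> `|fu - fx| <= i * h -> `|fv - fx| <= j * h ->
  `|2 * fx| <= (i + j + 1) * h.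
Proof.
rewrite !ler_norml => /andP [a1 a2] /andP [b1 b2] /andP [c1 c2].
apply/andP; split; lra.
Qed.

Lemma ar_odd {R : realType} {fw fv fx h i j : R} :
  `|fw - fv| <= h -> `|fw - fx| <= i * h -> `|fv + fx| <= j * h + h ->
  `|2 * fx| <= (i + j + 2) * h.
Proof.
rewrite !ler_norml => /andP [a1 a2] /andP [b1 b2] /andP [c1 c2].
apply/andP; split; lra.
Qed.

Lemma ar_sq {R : realType} {a b : R} : `|a| <= b -> a ^+ 2 <= b ^+ 2.
Proof.
move=> H; have b0 : 0 <= b by apply: le_trans H.
by rewrite -real_normK ?num_real // lerXn2r // ?nnegrE.
Qed.

Lemma ar_final {R : realType} (K C dm s mu : R) :
  0 < K -> 0 < dm -> 0 < s -> 0 <= mu -> K / 2 <= C ->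
  1 <= 2 * K ^+ 2 * dm * (1 + s) * mu ->
  1 <= 4 * (1 + s) * (dm * K * C) * mu.
Proof.
move=> K0 d0 s0 m0 HC H.
have s1 : 0 <= 1 + s by lra.
have H0 : 0 <= 4 * (1 + s) * dm * K * mu.
  by apply: mulr_ge0 => //; apply: mulr_ge0; [apply: mulr_ge0; [apply: mulr_ge0 => //|]|]; apply: ltW.
have E : 4 * (1 + s) * (dm * K * C) * mu = (4 * (1 + s) * dm * K * mu) * C by ring.
have E2 : 2 * K ^+ 2 * dm * (1 + s) * mu = (4 * (1 + s) * dm * K * mu) * (K / 2) by field.
rewrite E; apply: le_trans H _; rewrite E2.
by apply: ler_wpM2l.
Qed.

Theorem corollary3p14 (T : finType) (e : rel T) (R : realType) (N : \bar R) (lam : R) :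
  simple_graph e -> connected_graph e -> ~ bipartite e ->
  (1 < N)%E ->
  CD e (@sigma_neg T R) 0 N ->
  largest_lap_eigenvalue e lam ->
  2 - lam >=
    (4 * (1 + sqrtNratio N))^-1 *
    ((max_deg e)%:R * (diameter e).+1%:R
       * (Num.ceil ((diameter e).+1%:R / 2 : R))%:~R)^-1.
Proof.
move=> [sym irr] conn nbip N1 HCD [[f [[x1 fx1] Heig0]] _].
have [u0 [v0 e0]] : exists u v, e u v.
  case: (pickP (fun p : T * T => e p.1 p.2)) => [[u v] /= H|H]; first by exists u, v.
  exfalso; apply: nbip; exists (fun _ => true) => x y exy.
  by have := H (x, y); rewrite /= exy.
have dpos : forall x, (0 < deg e x)%N.
  move=> x; have /connectP [p Hp Hl] := conn x u0.
  rewrite /deg card_gt0; apply/set0Pn.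
  case: p Hp Hl => [_ /= <-|z p /= /andP [exz _] _]; first by exists v0; rewrite inE.
  by exists z; rewrite inE.
set mu := 2 - lam.
have Heig : forall z, lapS e (@sigma_neg T R) f z = - mu * f z.
  by move=> z; rewrite lapS_neg_lap // Heig0 /mu; ring.
have [s0 ss] := s_facts N N1.
set s := sqrtNratio N in s0 ss *.
case: (@arg_maxP _ _ T x1 xpredT (fun y => f y ^+ 2) isT) => x0 _ Hx0.
set M := f x0 ^+ 2 in Hx0.
have HM : forall y, f y ^+ 2 <= M by move=> y; exact: Hx0.
have fx0 : f x0 != 0.
  apply/negP => /eqP f0; have := HM x1; rewrite /M f0 expr0n /=.
  by rewrite leNgt lt0r sqrf_eq0 fx1 sqr_ge0.
have [mu0 HG] := @grad_est _ e _ N f mu s M x1 sym dpos HCD s0 ss Heig HM fx1.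
set Bb := 2 * (1 + s) * mu * M in HG.
set dm := (max_deg e)%:R : R.
have Hdm : forall x, (deg e x)%:R <= dm.
  by move=> x; rewrite ler_nat; exact: (leq_bigmax (F := fun x => deg e x) x).
have M0 : 0 < M by rewrite /M lt0r sqrf_eq0 fx0 sqr_ge0.
have B0 : 0 <= Bb.
  have : 0 <= (1 + s) * mu by rewrite mulr_ge0 // addr_ge0 // ltW.
  rewrite /Bb => H1; have := ltW M0; nra.
have dm0 : 0 < dm by apply: lt_le_trans (Hdm x0); rewrite ltr0n.
set h := Num.sqrt (4 * dm * Bb).
have h0 : 0 <= h by apply: sqrtr_ge0.
have X0 : 0 <= 4 * dm * Bb by rewrite mulr_ge0 // mulr_ge0 // ltW.
have hsq : h ^+ 2 = 4 * dm * Bb by rewrite sqr_sqrtr.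
have tosq : forall a : R, a ^+ 2 <= 4 * dm * Bb -> `|a| <= h.
  by move=> a Ha; rewrite -sqrtr_sqr ler_sqrt.
have Hp : forall x u w, e x u -> e x w -> `|f u - f w| <= h.
  by move=> x u w exu exw; apply: tosq; exact: (pair_bound e f dm Bb x u w (dpos x) (Hdm x) B0 (HG x) exu exw).
have He : forall u v, e u v -> `|f v + f u| <= h.
  by move=> u v euv; apply: tosq; exact: (edge_bound e f dm Bb u v (dpos u) (Hdm u) B0 (HG u) euv).
(* odd closed walk *)
have [u [v [euv Hc]]] : exists u v, e u v /\ odd (dist e x0 u) = odd (dist e x0 v).
  have : [exists u, exists v, e u v && (odd (dist e x0 u) == odd (dist e x0 v))].
    case: (boolP [exists u, exists v, e u v && (odd (dist e x0 u) == odd (dist e x0 v))]) => [//|H].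
    exfalso; apply: nbip; exists (fun y => odd (dist e x0 y)) => x y exy.
    apply/negP => Hxy; apply: (negP H); apply/existsP; exists x; apply/existsP; exists y.
    by rewrite exy.
  move=> /existsP [u /existsP [v /andP [euv /eqP Hc]]]; by exists u, v.
have Du := dist_le_diam e x0 u.
have Dv := dist_le_diam e x0 v.
have [i Hu] := walk_bound e f h x0 _ _ sym Hp He (dist_walk e x0 u conn).
have [j Hv] := walk_bound e f h x0 _ _ sym Hp He (dist_walk e x0 v conn).
set D := diameter e in Du Dv *.
set K := (D.+1)%:R : R.
have o0 : forall n, odd (2 * n) = false by move=> n; rewrite oddM.
have key : `|2 * f x0| <= K * h.
  case: Hu => [[au Bu]|[au [w [ewu [Bw Bu]]]]]; case: Hv => [[av Bv]|[av [w' [ewv [Bw' Bv]]]]];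
    rewrite ?au ?av /= ?o0 in Hc => //.
  - have Hij : (i + j + 1 <= D.+1)%N by clear -Du Dv au av; lia.
    apply: (le_trans (ar_even (He u v euv) Bu Bv)).
    rewrite ler_wpM2r //.
    have -> : (i%:R + j%:R + 1 : R) = (i + j + 1)%N%:R by rewrite !natrD.
    by rewrite ler_nat.
  - have Hij : (i + j + 2 <= D.+1)%N by clear -Du Dv au av; lia.
    have euw : e u w by rewrite sym.
    apply: (le_trans (ar_odd (Hp u w v euw euv) Bw Bv)).
    rewrite ler_wpM2r //.
    have -> : (i%:R + j%:R + 2 : R) = (i + j + 2)%N%:R by rewrite !natrD.
    by rewrite ler_nat.
have K0 : 0 < K by rewrite ltr0n.
have key2 : 4 * M <= K ^+ 2 * h ^+ 2.
  have E4 : (2 : R) ^+ 2 = 4 by rewrite expr2; lra.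
  by have := ar_sq key; rewrite !exprMn E4.
rewrite hsq /Bb in key2.
have key3 : 1 <= 2 * K ^+ 2 * dm * (1 + s) * mu.
  have : 4 * M * 1 <= 4 * M * (2 * K ^+ 2 * dm * (1 + s) * mu).
    rewrite mulr1; apply: (le_trans key2); rewrite le_eqVlt; apply/orP; left; apply/eqP; ring.
  have M4 : 0 < 4 * M by rewrite mulr_gt0 // ltr0n.
  by rewrite ler_pM2l.
set C := (Num.ceil (K / 2))%:~R : R.
have HC : K / 2 <= C by apply: ceil_ge.
have C0 : 0 < C by apply: lt_le_trans HC; rewrite divr_gt0.
set P := 4 * (1 + s) * (dm * K * C).
have P0 : 0 < P by rewrite /P !mulr_gt0 // addr_gt0.
have HP : 1 <= P * mu by apply: ar_final.
rewrite -invfM -/P.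
apply: (le_trans (y := P^-1 * (P * mu))).
  by rewrite -[X in X <= _]mulr1 ler_pM2l ?invr_gt0.
by rewrite mulKf // gt_eqF.
Qed.
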